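(* Let $\mathcal{A}=\mathbb{C}[x_{1},x_{2},x_{3}]$, $P=x_{1}x_{2}x_{3}$, let $n_{1},n_{2},n_{3}$ be positive integers and $\alpha_{1},\alpha_{2},\alpha_{3}\in\mathbb{C}$ such that $$h=\alpha_{1}P^{n_{1}}+\alpha_{2}P^{n_{2}}+\alpha_{3}P^{n_{3}}$$ is reduced, and let $D=\{h=0\}$. Put $a_{i}=\alpha_{i}P^{n_{i}-1}$ and $$\delta^{1}=x_{1}\partial_{x_{1}}-x_{2}\partial_{x_{2}},\quad \delta^{2}=x_{2}\partial_{x_{2}}-x_{3}\partial_{x_{3}},\quad \delta^{3}=a_{1}x_{1}\partial_{x_{1}}+a_{2}x_{2}\partial_{x_{2}}+a_{3}x_{3}\partial_{x_{3}}.$$ Then $\delta^{1},\delta^{2},\delta^{3}$ form a free Saito basis of $Der_{\mathcal{A}}(\log D)$: each $\delta^{i}$ satisfies $\delta^{i}(h)\in h\mathcal{A}$, the determinant of the coefficient matrix $$\begin{pmatrix} x_{1}&0&a_{1}x_{1}\\ -x_{2}&x_{2}&a_{2}x_{2}\\ 0&-x_{3}&a_{3}x_{3}\end{pmatrix}$$ equals $h$, and $\{\delta^{1},\delta^{2},\delta^{3}\}$ is a free $\mathcal{A}$-basis of $Der_{\mathcal{A}}(\log D)$.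
   Context: $Der_{\mathcal{A}}(\log D)=\{\delta\in Der_{\mathcal{A}}:\delta(h)\in h\mathcal{A}\}$ is the module of logarithmic vector fields along $D$. *)

(* Defs.v *)
(* multinomials' mpoly over C := R[i] (real-closed complex),
   with R : realType, so C is (a copy of) the complex numbers. *)
From HB Require Import structures.
From mathcomp Require Import all_boot all_order all_algebra.
From mathcomp Require Import reals.
From mathcomp Require Import complex.
From mathcomp Require Import mpoly.
Set Implicit Arguments. Unset Strict Implicit. Unset Printing Implicit Defensive.
Import Order.TTheory GRing.Theory Num.Theory.
Local Open Scope ring_scope.

Notation A3 K := {mpoly K[3]}.

(* A K-derivation of A = K[x1,x2,x3] is determined by its coefficients:
   delta = \sum_i d i * \partial_{x_i}.  We represent it by d : 'I_3 -> A. *)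
Definition der_apply (K : comNzRingType) (d : 'I_3 -> A3 K) (f : A3 K) : A3 K :=
  \sum_(i < 3) d i * mderiv i f.

Definition mdvd (K : comNzRingType) (h f : A3 K) : Prop := exists q : A3 K, f = h * q.

Definition logder (K : comNzRingType) (h : A3 K) (d : 'I_3 -> A3 K) : Prop :=
  mdvd h (der_apply d h).

Definition reduced (K : comNzRingType) (h : A3 K) : Prop :=
  h != 0 /\ forall g q : A3 K, h = g * g * q -> (msize g <= 1)%N.

Definition coefmx (K : comNzRingType) (ds : 'I_3 -> 'I_3 -> A3 K) : 'M[A3 K]_3 :=
  \matrix_(i < 3, j < 3) ds j i.

Definition free_basis_logder (K : comNzRingType) (h : A3 K)
    (ds : 'I_3 -> 'I_3 -> A3 K) : Prop :=
  (forall j, logder h (ds j)) /\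
  (forall d, logder h d ->
     exists c : 'I_3 -> A3 K, forall i, d i = \sum_(j < 3) c j * ds j i) /\
  (forall c : 'I_3 -> A3 K,
     (forall i, \sum_(j < 3) c j * ds j i = 0) -> forall j, c j = 0).

Definition Pm (K : comNzRingType) : A3 K := 'X_0 * 'X_1 * 'X_2.

Definition hpoly (K : comNzRingType) (alpha : 'I_3 -> K) (n : 'I_3 -> nat) : A3 K :=
  \sum_(i < 3) alpha i *: Pm K ^+ n i.

Definition acoef (K : comNzRingType) (alpha : 'I_3 -> K) (n : 'I_3 -> nat) (i : 'I_3)
  : A3 K := alpha i *: Pm K ^+ (n i).-1.

(* delta^1 = x1 d1 - x2 d2, delta^2 = x2 d2 - x3 d3, delta^3 = sum a_i x_i d_i
   (indices shifted to 0,1,2) *)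
Definition saito_ders (K : comNzRingType) (alpha : 'I_3 -> K) (n : 'I_3 -> nat)
  : 'I_3 -> 'I_3 -> A3 K :=
  fun j i =>
    if j == 0 :> nat then
      (if i == 0 :> nat then 'X_i else if i == 1 :> nat then - 'X_i else 0)
    else if j == 1 :> nat then
      (if i == 1 :> nat then 'X_i else if i == 2 :> nat then - 'X_i else 0)
    else acoef alpha n i * 'X_i.

(* Main.v *)
Require Import Defs.
From HB Require Import structures.
From mathcomp Require Import all_boot all_order all_algebra.
From mathcomp Require Import reals.
From mathcomp Require Import complex.
From mathcomp Require Import mpoly.
From mathcomp Require Import ring.
Import Order.TTheory GRing.Theory Num.Theory.
Local Open Scope ring_scope.

Definition i0 : 'I_3 := @Ordinal 3 0 isT.
Definition i1 : 'I_3 := @Ordinal 3 1 isT.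
Definition i2 : 'I_3 := @Ordinal 3 2 isT.

Lemma ord3 (j : 'I_3) : j = i0 \/ j = i1 \/ j = i2.
Proof.
case: j => [[|[|[|k]]] Hk].
- by left; apply/val_inj.
- by right; left; apply/val_inj.
- by right; right; apply/val_inj.
- by [].
Qed.

Lemma sum3 (V : nmodType) (F : 'I_3 -> V) : \sum_(i < 3) F i = F i0 + F i1 + F i2.
Proof.
rewrite !big_ord_recl big_ord0 addr0 addrA.
by congr (F _ + F _ + F _); apply/val_inj.
Qed.

Lemma det33 (R : comNzRingType) (A : 'M[R]_3) : \det A =
  A i0 i0 * A i1 i1 * A i2 i2 - A i0 i0 * A i1 i2 * A i2 i1
 - A i0 i1 * A i1 i0 * A i2 i2 + A i0 i1 * A i1 i2 * A i2 i0
 + A i0 i2 * A i1 i0 * A i2 i1 - A i0 i2 * A i1 i1 * A i2 i0.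
Proof.
rewrite (expand_det_row _ ord0) !big_ord_recr big_ord0 /= /cofactor.
rewrite !(expand_det_row _ ord0) !big_ord_recr !big_ord0 /= /cofactor.
rewrite !det_mx11 !mxE /= !expr0 !expr1 ?expr2.
pose a := fun v w : nat => A (inord v) (inord w).
repeat match goal with |- context [fun_of_matrix A ?i ?j] =>
  let v := eval compute in (nat_of_ord i) in
  let w := eval compute in (nat_of_ord j) in
  have e : A i j = a v w; [ by rewrite /a; congr (A _ _); apply/val_inj; rewrite /= inordK // | rewrite e; clear e ] end.
clearbody a.
ring.
Qed.

Section Main.
Variable R : realType.
Local Notation C := (R[i]).
Local Notation M := {mpoly C[3]}.

Lemma X0E : ('X_0 : M) = 'X_i0. Proof. by congr mpolyX; congr mnm1; apply/val_inj. Qed.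
Lemma X1E : ('X_1 : M) = 'X_i1. Proof. by congr mpolyX; congr mnm1; apply/val_inj. Qed.
Lemma X2E : ('X_2 : M) = 'X_i2. Proof. by congr mpolyX; congr mnm1; apply/val_inj. Qed.

Lemma PmE : Pm C = 'X_i0 * 'X_i1 * 'X_i2.
Proof. by rewrite /Pm X0E X1E X2E. Qed.

Lemma mderivXi (i j : 'I_3) : mderiv j ('X_i : M) = (i == j)%:R.
Proof.
rewrite mderivX mnm1E; case: eqP => [->|_]; last by rewrite scale0r.
have -> : (U_(j) - U_(j) = 0)%MM by apply/mnmP => k; rewrite mnmBE subnn mnmE.
by rewrite mpolyX0 scale1r.
Qed.

Lemma X_neq0 (i : 'I_3) : ('X_i : M) != 0.
Proof. by rewrite -msize_poly_eq0 msizeX. Qed.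

Lemma Pm_neq0 : Pm C != 0.
Proof. by rewrite PmE !mulf_neq0 ?X_neq0. Qed.

Lemma dP0 : mderiv i0 (Pm C) = 'X_i1 * 'X_i2.
Proof. rewrite PmE !mderivM !mderivXi /=. ring. Qed.
Lemma dP1 : mderiv i1 (Pm C) = 'X_i0 * 'X_i2.
Proof. rewrite PmE !mderivM !mderivXi /=. ring. Qed.
Lemma dP2 : mderiv i2 (Pm C) = 'X_i0 * 'X_i1.
Proof. rewrite PmE !mderivM !mderivXi /=. ring. Qed.


Definition ev (p : {poly C}) : M := (map_poly (@mpolyC 3 C) p).[Pm C].

Lemma evD p q : ev (p + q) = ev p + ev q.
Proof. by rewrite /ev rmorphD hornerD. Qed.
Lemma evB p q : ev (p - q) = ev p - ev q.
Proof. by rewrite /ev rmorphB hornerD hornerN. Qed.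
Lemma evM p q : ev (p * q) = ev p * ev q.
Proof. by rewrite /ev rmorphM hornerM. Qed.
Lemma evC c : ev c%:P = c%:MP.
Proof. by rewrite /ev map_polyC hornerC. Qed.
Lemma ev1 : ev 1 = 1.
Proof. by rewrite /ev rmorph1 hornerC. Qed.
Lemma evX : ev 'X = Pm C.
Proof. by rewrite /ev map_polyX hornerX. Qed.
Lemma evXn k : ev 'X^k = Pm C ^+ k.
Proof. by rewrite /ev map_polyXn hornerXn. Qed.
Lemma evZ c p : ev (c *: p) = c *: ev p.
Proof. by rewrite -mul_polyC evM evC mul_mpolyC. Qed.

Lemma chain (j : 'I_3) p : mderiv j (ev p) = ev p^`() * mderiv j (Pm C).
Proof.
elim/poly_ind: p => [|p c IH].
  by rewrite deriv0 /ev !rmorph0 horner0 mderiv0 mul0r.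
rewrite !derivE !evD !evM evX mderivD mderivM IH /ev map_polyC hornerC mderivC.
ring.
Qed.

Lemma Xdvd (i : 'I_3) (f g : M) (m : 'X_{1..3}) :
  m i = 0%N -> f * 'X_[m] = 'X_i * g -> exists e, f = 'X_i * e.
Proof.
move=> mi E.
have H : forall k, k \in msupp f -> (0 < k i)%N.
  move=> k kf.
  have : (m + k)%MM \in msupp (f * 'X_[m]) by rewrite (perm_mem (msuppMX f m)) map_f.
  rewrite E mulrC (perm_mem (msuppMX g _)) => /mapP [k' _] /(congr1 (fun mm : 'X_{1..3} => mm i)).
  by rewrite !mnmDE mi mnm1E eqxx add0n => ->.
exists (\sum_(k <- msupp f) f@_k *: 'X_[k - U_(i)]).
rewrite mulr_sumr {1}(mpolyE f); apply: eq_big_seq => k kf.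
rewrite -scalerAr -mpolyXD addmC submK //; apply/mnm_lepP => j; rewrite mnm1E.
by case: eqP => [<-|]; [exact: H|].
Qed.

Variables (n : 'I_3 -> nat) (alpha : 'I_3 -> C).

Definition Qp : {poly C} := \sum_(i < 3) alpha i *: 'X^(n i).
Definition Hh : M := \sum_(i < 3) acoef alpha n i.

Lemma evQ : ev Qp = hpoly alpha n.
Proof. by rewrite /Qp /hpoly !sum3 !evD !evZ !evXn. Qed.

Lemma hE (hn : forall i, (0 < n i)%N) : hpoly alpha n = Pm C * Hh.
Proof.
rewrite /hpoly /Hh mulr_sumr; apply: eq_bigr => i _.
by rewrite /acoef -scalerAr -exprS prednK.
Qed.

Lemma coprimeQ : reduced (hpoly alpha n) -> coprimep Qp Qp^`().
Proof.
move=> [h0 hr]; apply/negPn/negP => nc.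
have : size (gcdp Qp Qp^`()) != 1%N by exact: nc.
move/closed_rootP => [z]; rewrite root_gcd => /andP [rz rdz].
have [r Er] := factor_theorem _ _ rz.
move: rdz; rewrite Er derivM derivXsubC mulr1 rootE !hornerE subrr mulr0 add0r => rr.
have [r2 Er2] := factor_theorem _ _ rr.
have : hpoly alpha n = ev ('X - z%:P) * ev ('X - z%:P) * ev r2.
  by rewrite -evQ Er Er2 !evM; ring.
move/hr/msize1_polyC => Eg.
have := chain i0 ('X - z%:P).
rewrite Eg mderivC derivXsubC ev1 mul1r dP0 => /eqP.
by rewrite eq_sym mulf_eq0 !(negbTE (X_neq0 _)).
Qed.

Lemma eq_by_diff (x y a b : M) : x - y = a - b -> a = b -> x = y.
Proof. by move=> H Hab; apply/eqP; rewrite -subr_eq0 H Hab subrr. Qed.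
Arguments eq_by_diff {x y a b}.
Lemma eq_by_diffk (x y a b k : M) : x - y = k * (a - b) -> a = b -> x = y.
Proof. by move=> H Hab; apply/eqP; rewrite -subr_eq0 H Hab subrr mulr0. Qed.
Arguments eq_by_diffk {x y a b}.

Definition Ed : M := ev Qp^`().

Lemma derh d : der_apply d (hpoly alpha n) =
  Ed * (d i0 * ('X_i1 * 'X_i2) + d i1 * ('X_i0 * 'X_i2) + d i2 * ('X_i0 * 'X_i1)).
Proof. rewrite /der_apply sum3 -evQ !chain dP0 dP1 dP2 /Ed; ring. Qed.

Lemma logder_sd (hn : forall i, (0 < n i)%N) j : logder (hpoly alpha n) (saito_ders alpha n j).
Proof.
rewrite /logder /mdvd derh.
case: (ord3 j) => [->|[->|->]]; rewrite /saito_ders /=.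
- by exists 0; ring.
- by exists 0; ring.
- by exists Ed; rewrite (hE hn) PmE /Hh sum3; ring.
Qed.

Lemma det_sd (hn : forall i, (0 < n i)%N) : \det (coefmx (saito_ders alpha n)) = hpoly alpha n.
Proof. rewrite det33 /coefmx !mxE /saito_ders /= (hE hn) /Hh sum3 PmE; ring. Qed.

Lemma indep_sd (hred : reduced (hpoly alpha n)) (hn : forall i, (0 < n i)%N)
  (c : 'I_3 -> M) :
  (forall i, \sum_(j < 3) c j * saito_ders alpha n j i = 0) -> forall j, c j = 0.
Proof.
move=> Hc.
have Hh0 : hpoly alpha n * c i2 = 0.
  transitivity ('X_i1 * 'X_i2 * (\sum_(j < 3) c j * saito_ders alpha n j i0)
    + 'X_i0 * 'X_i2 * (\sum_(j < 3) c j * saito_ders alpha n j i1)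
    + 'X_i0 * 'X_i1 * (\sum_(j < 3) c j * saito_ders alpha n j i2)).
    by rewrite !sum3 /saito_ders /= (hE hn) PmE /Hh sum3; ring.
  by rewrite !Hc; ring.
have c2z : c i2 = 0.
  by move/eqP: Hh0; rewrite mulf_eq0 (negbTE hred.1) => /eqP.
have c0z : c i0 = 0.
  have : c i0 * 'X_i0 = 0.
    by rewrite -(Hc i0) sum3 /saito_ders /= c2z; ring.
  by move/eqP; rewrite mulf_eq0 (negbTE (X_neq0 _)) orbF => /eqP.
have c1z : c i1 = 0.
  have : c i1 * 'X_i2 = 0.
    by rewrite -oppr0 -(Hc i2) sum3 /saito_ders /= c2z; ring.
  by move/eqP; rewrite mulf_eq0 (negbTE (X_neq0 _)) orbF => /eqP.
by move=> j; case: (ord3 j) => [->|[->|->]].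
Qed.

Definition Sd (d : 'I_3 -> M) : M :=
  d i0 * ('X_i1 * 'X_i2) + d i1 * ('X_i0 * 'X_i2) + d i2 * ('X_i0 * 'X_i1).

Lemma gen_sd (hred : reduced (hpoly alpha n)) (hn : forall i, (0 < n i)%N)
  (d : 'I_3 -> M) : logder (hpoly alpha n) d ->
  exists c : 'I_3 -> M, forall i, d i = \sum_(j < 3) c j * saito_ders alpha n j i.
Proof.
move=> [q Eq]; rewrite derh -/(Sd d) in Eq.
have [[u v] /= Buv] := Bezout_eq1_coprimepP _ _ (coprimeQ hred).
have B : ev u * hpoly alpha n + ev v * Ed = 1 by rewrite /Ed -evQ -!evM -evD Buv ev1.
pose c3 := ev u * Sd d + ev v * q.
have ES : Sd d = Pm C * Hh * c3.
  rewrite -(hE hn) -[LHS]mulr1 -B.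
  have -> : Sd d * (ev u * hpoly alpha n + ev v * Ed) =
     ev u * hpoly alpha n * Sd d + ev v * (Ed * Sd d) by ring.
  by rewrite Eq /c3; ring.
rewrite PmE in ES.
have [e0 E0] : exists e, d i0 = 'X_i0 * e.
  apply: (@Xdvd i0 _ ('X_i1 * 'X_i2 * Hh * c3 - d i1 * 'X_i2 - d i2 * 'X_i1)
     (U_(i1) + U_(i2))%MM); first by rewrite mnmDE !mnm1E.
  rewrite mpolyXD; apply: (eq_by_diff _ ES); rewrite /Sd; ring.
have [e1 E1] : exists e, d i1 = 'X_i1 * e.
  apply: (@Xdvd i1 _ ('X_i0 * 'X_i2 * Hh * c3 - d i0 * 'X_i2 - d i2 * 'X_i0)
     (U_(i0) + U_(i2))%MM); first by rewrite mnmDE !mnm1E.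
  rewrite mpolyXD; apply: (eq_by_diff _ ES); rewrite /Sd; ring.
have [e2 E2] : exists e, d i2 = 'X_i2 * e.
  apply: (@Xdvd i2 _ ('X_i0 * 'X_i1 * Hh * c3 - d i0 * 'X_i1 - d i1 * 'X_i0)
     (U_(i0) + U_(i1))%MM); first by rewrite mnmDE !mnm1E.
  rewrite mpolyXD; apply: (eq_by_diff _ ES); rewrite /Sd; ring.
have Ee : e0 + e1 + e2 = Hh * c3.
  apply: (mulfI Pm_neq0); rewrite PmE.
  apply: (eq_by_diff _ ES); rewrite /Sd E0 E1 E2; ring.
exists (fun j => if j == i0 then e0 - c3 * acoef alpha n i0
  else if j == i1 then e0 - c3 * acoef alpha n i0 + e1 - c3 * acoef alpha n i1 else c3).
move=> i; rewrite sum3 /=; case: (ord3 i) => [->|[->|->]]; rewrite /saito_ders /=.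
- by rewrite E0; ring.
- by rewrite E1; ring.
- rewrite E2; apply: (eq_by_diffk ('X_i2) _ Ee); rewrite /Hh sum3; ring.
Qed.

End Main.

Theorem mainTheorem5 (R : realType) (n : 'I_3 -> nat) (alpha : 'I_3 -> R[i])
  (hn : forall i, (0 < n i)%N)
  (hred : reduced (hpoly alpha n)) :
  (forall j, logder (hpoly alpha n) (saito_ders alpha n j)) /\
  \det (coefmx (saito_ders alpha n)) = hpoly alpha n /\
  free_basis_logder (hpoly alpha n) (saito_ders alpha n).
Proof.
split; first exact: logder_sd.
split; first exact: det_sd.
split; first exact: logder_sd.
split; first exact: gen_sd.
exact: indep_sd.
Qed.
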